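(* Let $T\in S(n,d)$ and let $\sigma\subseteq[n]$ be a simplex on $\gamma_d$. Then $\sigma\le_{d+1}T$ if and only if there are no $\sigma'\subseteq\sigma$ and $\tau\in T$ with $|\sigma'|=\lceil d/2\rceil+1$, $|\tau|=\lfloor d/2\rfloor+1$ and $\tau<_{d+1}\sigma'$. Similarly, $T\le_{d+1}\sigma$ if and only if there are no $\sigma'\subseteq\sigma$ and $\tau\in T$ with $|\tau|=\lceil d/2\rceil+1$, $|\sigma'|=\lfloor d/2\rfloor+1$ and $\sigma'<_{d+1}\tau$.
   Context: $\gamma_d=\{(t,t^2,\dots,t^d):t\in\mathbb{R}\}$. Fix $t_1<\dots<t_n$ and points $\gamma_d(t_i)$ identified with $i\in[n]$; $C(n,d)$ is their convex hull and $S(n,d)$ the set of triangulations of $C(n,d)$ with vertices in $[n]$. A simplex is a subset of size at most $d+1$, identified with its convex hull; simplices $\sigma,\tau$ overlap if $\mathrm{conv}(\sigma)\cap\mathrm{conv}(\tau)\supsetneq\mathrm{conv}(\sigma\cap\tau)$. The height function $h_\sigma:\mathrm{conv}(\sigma)\to\mathbb{R}$ gives the last coordinate of the point in the convex hull of the lifted points $\gamma_{d+1}(t_i)$, $i\in\sigma$, that projects to $p$. $\sigma<_{d+1}\tau$ means $\sigma,\tau$ overlap in $\mathbb{R}^d$ and $h_\sigma\le h_\tau$ on $\mathrm{conv}(\sigma)\cap\mathrm{conv}(\tau)$. For $T\in S(n,d)$, $h_T:C(n,d)\to\mathbb{R}$ is $h_T(p)=h_\tau(p)$ for $p\in\mathrm{conv}(\tau)$,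 $\tau\in T$. $\sigma\le_{d+1}T$ means $h_\sigma\le h_T$ on $\mathrm{conv}(\sigma)$, and $T\le_{d+1}\sigma$ means $h_T\le h_\sigma$ on $\mathrm{conv}(\sigma)$. *)

(* Defs.v *)
From mathcomp Require Import all_boot all_order all_algebra.
From mathcomp Require Import reals.
Unset Printing Implicit Defensive.
Import Order.TTheory GRing.Theory Num.Theory.
Local Open Scope ring_scope.

Section CyclicPolytope.
Variables (R : realType) (n : nat) (t : 'I_n -> R).

Definition gamma (d : nat) (x : R) : 'rV[R]_d := \row_(k < d) x ^+ k.+1.

Definition conv (d : nat) (A : {set 'I_n}) : 'rV[R]_d -> Prop :=
  fun p => exists lam : 'I_n -> R,
    [/\ forall i, 0 <= lam i,
        forall i, i \notin A -> lam i = 0,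
        \sum_i lam i = 1
      & p = \sum_i lam i *: gamma d (t i)].

(* sigma, tau overlap: conv(sigma) /\ conv(tau) strictly contains conv(sigma /\ tau) *)
Definition overlap (d : nat) (s u : {set 'I_n}) : Prop :=
  (forall p, conv d (s :&: u) p -> conv d s p /\ conv d u p) /\
  exists p, [/\ conv d s p, conv d u p & ~ conv d (s :&: u) p].

Definition proj (d : nat) (q : 'rV[R]_d.+1) : 'rV[R]_d :=
  \row_(k < d) q 0 (widen_ord (leqnSn d) k).
Definition lastc (d : nat) (q : 'rV[R]_d.+1) : R := q 0 ord_max.

(* h_sigma(p) = h : the point of conv of the lifted points gamma_{d+1}(t_i),
   i in sigma, projecting to p, has last coordinate h *)
Definition is_height (d : nat) (s : {set 'I_n}) (p : 'rV[R]_d) (h : R) : Prop :=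
  exists q, [/\ conv d.+1 s q, proj d q = p & lastc d q = h].

Definition lt_hd (d : nat) (s u : {set 'I_n}) : Prop :=
  overlap d s u /\
  forall p hs hu, is_height d s p hs -> is_height d u p hu -> hs <= hu.

(* S(n,d): triangulations of C(n,d), given by their d-simplices *)
Definition triangulation (d : nat) (T : {set {set 'I_n}}) : Prop :=
  [/\ forall s, s \in T -> #|s| = d.+1,
      forall p, conv d [set: 'I_n] p <-> exists2 s, s \in T & conv d s p
    & forall s u, s \in T -> u \in T -> ~ overlap d s u].

Definition in_triang (T : {set {set 'I_n}}) (u : {set 'I_n}) : Prop :=
  exists2 s, s \in T & u \subset s.

Definition le_sT (d : nat) (s : {set 'I_n}) (T : {set {set 'I_n}}) : Prop :=
  forall p hs u hu, u \in T -> is_height d s p hs -> is_height d u p hu -> hs <= hu.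

Definition le_Ts (d : nat) (T : {set {set 'I_n}}) (s : {set 'I_n}) : Prop :=
  forall p hs u hu, u \in T -> is_height d s p hs -> is_height d u p hu -> hu <= hs.

End CyclicPolytope.

Arguments gamma {R} d x.
Arguments conv {R n} t d A p.
Arguments overlap {R n} t d s u.
Arguments proj {R} d q.
Arguments lastc {R} d q.
Arguments is_height {R n} t d s p h.
Arguments lt_hd {R n} t d s u.
Arguments triangulation {R n} t d T.
Arguments in_triang {n} T u.
Arguments le_sT {R n} t d s T.
Arguments le_Ts {R n} t d T s.

(* Main.v *)
Require Import Defs.
From mathcomp Require Import all_boot all_order all_algebra.
From mathcomp Require Import reals.
From mathcomp Require Import lra.
Import Order.TTheory GRing.Theory Num.Theory.
Local Open Scope ring_scope.
Set Implicit Arguments.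
Unset Strict Implicit.

Section Main.
Variables (R : realType) (n : nat) (t : 'I_n -> R).
Hypothesis t_incr : forall i j : 'I_n, (i < j)%N -> t i < t j.

Lemma t_neq (i j : 'I_n) : i != j -> t i != t j.
Proof.
move=> hij; case: (ltngtP i j) => h.
- by rewrite lt_eqF // t_incr.
- by rewrite gt_eqF // t_incr.
- by move: hij; rewrite (val_inj h) eqxx.
Qed.

Lemma conv_sub d (A B : {set 'I_n}) p : A \subset B -> conv t d A p -> conv t d B p.
Proof.
move=> sAB [lam [h0 h1 h2 h3]]; exists lam; split=> // i iB.
by apply: h1; apply: contra iB; apply: (subsetP sAB).
Qed.

Lemma sum_entry d (lam : 'I_n -> R) (k : 'I_d) :
  (\sum_i lam i *: gamma d (t i)) 0 k = \sum_i lam i * t i ^+ k.+1.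
Proof. by rewrite summxE; apply: eq_bigr => i _; rewrite !mxE. Qed.

Lemma height_inv d (A : {set 'I_n}) p h : is_height t d A p h ->
  exists lam : 'I_n -> R, [/\ forall i, 0 <= lam i, forall i, i \notin A -> lam i = 0,
    \sum_i lam i = 1, forall k : 'I_d, p 0 k = \sum_i lam i * t i ^+ k.+1
    & h = \sum_i lam i * t i ^+ d.+1].
Proof.
move=> [q [[lam [h0 h1 h2 ->]] hp hh]]; exists lam; split=> //.
  move=> k; rewrite -hp /proj mxE sum_entry //.
by rewrite -hh /lastc sum_entry.
Qed.

Lemma height_of d (A : {set 'I_n}) (lam : 'I_n -> R) :
  (forall i, 0 <= lam i) -> (forall i, i \notin A -> lam i = 0) -> \sum_i lam i = 1 ->
  is_height t d A (\sum_i lam i *: gamma d (t i)) (\sum_i lam i * t i ^+ d.+1).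
Proof.
move=> h0 h1 h2; exists (\sum_i lam i *: gamma d.+1 (t i)); split.
- by exists lam.
- by apply/rowP => k; rewrite /proj mxE !sum_entry.
- by rewrite /lastc sum_entry.
Qed.

Lemma conv_inv d (A : {set 'I_n}) p : conv t d A p ->
  exists lam : 'I_n -> R, [/\ forall i, 0 <= lam i, forall i, i \notin A -> lam i = 0,
    \sum_i lam i = 1 & p = \sum_i lam i *: gamma d (t i)].
Proof. by []. Qed.

Definition mom (nu : 'I_n -> R) k := \sum_i nu i * t i ^+ k.

Lemma mom_poly d (nu : 'I_n -> R) : (forall k, (k <= d)%N -> mom nu k = 0) ->
  forall Q : {poly R}, (size Q <= d.+2)%N ->
  \sum_i nu i * Q.[t i] = Q`_d.+1 * mom nu d.+1.
Proof.
move=> hm Q hQ.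
have hc c k : \sum_i nu i * (c * t i ^+ k) = c * mom nu k.
  by rewrite /mom big_distrr /=; apply: eq_bigr => i _; rewrite mulrCA.
have -> : \sum_i nu i * Q.[t i] = \sum_i \sum_(k < d.+2) nu i * (Q`_k * t i ^+ k).
  by apply: eq_bigr => i _; rewrite (horner_coef_wide _ hQ) big_distrr.
rewrite exchange_big big_ord_recr /= big1 ?add0r ?hc //.
by move=> k _; rewrite hc hm ?mulr0 // -ltnS.
Qed.


Definition sv (eps : bool) (nu : 'I_n -> R) i := if eps then nu i else - nu i.

Fixpoint altc (nu : 'I_n -> R) (eps : bool) (b : nat) (s : seq 'I_n) : Prop :=
  match s with
  | [::] => True
  | g :: s' => [/\ (g < b)%N, 0 < sv eps nu g & altc nu (~~ eps) g s']
  end.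

Definition PX (rs : seq R) : {poly R} := \prod_(r <- rs) ('X - r%:P).

Lemma PX_cons x rs y : (PX (x :: rs)).[y] = (y - x) * (PX rs).[y].
Proof. by rewrite /PX big_cons hornerM hornerXsubC. Qed.

Lemma PX_nil y : (PX [::]).[y] = 1.
Proof. by rewrite /PX big_nil hornerC. Qed.

Lemma svN eps nu i : sv (~~ eps) nu i = - sv eps nu i.
Proof. by case: eps; rewrite /sv /= ?opprK. Qed.

Lemma ltS_case (b : nat) (i : 'I_n) : (i < b.+1)%N ->
  (i < b)%N \/ exists hb : (b < n)%N, i = Ordinal hb.
Proof.
rewrite ltnS leq_eqVlt => /orP[/eqP hi|]; last by left.
right; have hb : (b < n)%N by rewrite -hi.
by exists hb; apply: val_inj.
Qed.

Lemma largest nu eps b :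
  (forall i : 'I_n, (i < b)%N -> sv eps nu i <= 0) \/
  exists g : 'I_n, [/\ (g < b)%N, 0 < sv eps nu g &
     forall i : 'I_n, (g < i)%N -> (i < b)%N -> sv eps nu i <= 0].
Proof.
elim: b => [|b IH]; first by left.
have [hb|hnb] := boolP [exists i : 'I_n, (val i == b) && (0 < sv eps nu i)].
  case/existsP: hb => g /andP[/eqP gb hg]; right; exists g; split=> //.
    by rewrite gb.
  by move=> i; rewrite gb => h1 h2; move: (leq_ltn_trans h1 h2); rewrite ltnn.
have nb : forall i : 'I_n, val i = b -> sv eps nu i <= 0.
  move=> i hi; move/existsP: hnb => hnb.
  by rewrite leNgt; apply/negP => h; apply: hnb; exists i; rewrite hi eqxx h.
case: IH => [hl|[g [h1 h2 h3]]].
  left=> i /ltS_case [|[hb ->]]; first exact: hl.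
  exact: nb.
right; exists g; split=> //; first exact: ltnW.
move=> i hgi /ltS_case [|[hb ->]]; first exact: h3.
exact: nb.
Qed.

Lemma chain nu k : forall b eps,
  (exists s, altc nu eps b s /\ size s = k) \/
  exists rs : seq R, [/\ (size rs < k)%N,
     forall i : 'I_n, (i < b)%N -> sv eps nu i * (PX rs).[t i] <= 0
   & forall i : 'I_n, (b <= i)%N -> 0 <= (PX rs).[t i]].
Proof.
elim: k => [|k IH] b eps; first by left; exists [::].
case: (largest nu eps b) => [hl|[g [h1 h2 h3]]].
  right; exists [::]; split=> // i hi; rewrite PX_nil ?mulr1 ?ler01 //; exact: hl.
case: (IH g (~~ eps)) => [[s [hs1 hs2]]|[rs [hr1 hr2 hr3]]].
  by left; exists (g :: s); split=> //=; rewrite hs2.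
right; exists (t g :: rs); split=> //.
  move=> i hib; rewrite PX_cons.
  case: (ltngtP i g) => hig.
  - have := hr2 i hig; rewrite svN mulNr oppr_le0 => hp.
    have hneg : t i - t g < 0 by rewrite subr_lt0 t_incr.
    by rewrite mulrCA; apply: mulr_le0_ge0 (ltW hneg) hp.
  - have hle := h3 i hig hib.
    have hpos : 0 <= t i - t g by rewrite subr_ge0 ltW // t_incr.
    have hP := hr3 i (ltnW hig).
    by rewrite mulrA; apply: mulr_le0_ge0 => //; apply: mulr_le0_ge0.
  - by rewrite (_ : i = g) ?subrr ?mul0r ?mulr0 //; apply: val_inj.
move=> i hbi; rewrite PX_cons; apply: mulr_ge0.
  by rewrite subr_ge0 ltW // t_incr // (leq_trans h1 hbi).
by apply: hr3; apply: ltnW; apply: (leq_trans h1 hbi).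
Qed.

Lemma PX_nseq m a y : (PX (nseq m a)).[y] = (y - a) ^+ m.
Proof. by elim: m => [|m IH]; rewrite ?PX_nil ?expr0 //= PX_cons IH exprS. Qed.

Lemma PX_cat r1 r2 y : (PX (r1 ++ r2)).[y] = (PX r1).[y] * (PX r2).[y].
Proof. by rewrite /PX big_cat hornerM. Qed.

Lemma chain_exists nu d : (forall k, (k <= d)%N -> mom nu k = 0) -> 0 < mom nu d.+1 ->
  exists s, altc nu true n s /\ size s = d.+2.
Proof.
move=> hm hpos; case: (chain nu d.+2 n true) => // [[rs [hs hneg _]]]; exfalso.
pose a := - \sum_i `|t i| - 1.
have ha i : a < t i.
  rewrite /a; have : `|t i| <= \sum_j `|t j|.
    by rewrite (bigD1 i) //= lerDl sumr_ge0.
  have := ler_norm (- t i); rewrite normrN.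
  move=> h1 h2; lra.
pose Q := PX (rs ++ nseq (d.+1 - size rs) a).
have sQ : size Q = d.+2.
  by rewrite /Q /PX size_prod_XsubC size_cat size_nseq subnKC.
have lQ : Q`_d.+1 = 1.
  by rewrite -[d.+1]/(d.+2.-1) -sQ -lead_coefE /Q /PX lead_coef_prod_XsubC.
have := mom_poly hm (eq_leq sQ); rewrite lQ mul1r => hE.
suff : \sum_i nu i * Q.[t i] <= 0 by rewrite hE leNgt hpos.
apply: sumr_le0 => i _; rewrite /Q PX_cat PX_nseq mulrA.
apply: mulr_le0_ge0; first exact: hneg.
by apply: exprn_ge0; rewrite subr_ge0 ltW.
Qed.

Lemma altc_lt nu eps b s : altc nu eps b s -> forall x, x \in s -> (x < b)%N.
Proof.
elim: s eps b => [//|g s IH] eps b /= [h1 h2 h3] x.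
rewrite inE => /orP[/eqP ->//|xs].
exact: ltn_trans (IH _ _ h3 x xs) h1.
Qed.

Lemma altc_uniq nu eps b s : altc nu eps b s -> uniq s.
Proof.
elim: s eps b => [//|g s IH] eps b /= [h1 h2 h3].
rewrite (IH _ _ h3) andbT; apply/negP => gs.
by have := altc_lt h3 gs; rewrite ltnn.
Qed.

Lemma altc_sv nu eps b s : altc nu eps b s -> forall x, x \in s -> sv eps nu x != 0.
Proof.
elim: s eps b => [//|g s IH] eps b /= [h1 h2 h3] x.
rewrite inE => /orP[/eqP ->|xs]; first by rewrite gt_eqF.
by have := IH _ _ h3 x xs; rewrite svN oppr_eq0.
Qed.

Lemma altc_count nu eps b s : altc nu eps b s ->
  count (fun i => 0 < nu i) s = (if eps then uphalf (size s) else (size s)./2) /\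
  count (fun i => nu i < 0) s = (if eps then (size s)./2 else uphalf (size s)).
Proof.
elim: s eps b => [|g s IH] eps b /=; first by case: eps.
move=> [h1 h2 h3]; have [c1 c2] := IH _ _ h3.
rewrite c1 c2; case: eps h2 {h3 c1 c2} => /=; rewrite /sv => h2.
  by rewrite h2 (lt_gtF h2) /= uphalfE.
by rewrite oppr_gt0 in h2; rewrite h2 (lt_gtF h2) /= uphalfE.
Qed.

Definition Dp (s : seq 'I_n) i := \prod_(j <- rem i s) (t i - t j).

Lemma altc_Dp nu eps b s : altc nu eps b s -> forall x, x \in s -> 0 < sv eps nu x * Dp s x.
Proof.
elim: s eps b => [//|g s IH] eps b /= [h1 h2 h3] x.
rewrite /Dp /= inE eq_sym.
case: (eqVneq g x) => [<- _|hxg /= xs].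
  rewrite mulr_gt0 // big_seq prodr_gt0 // => j js.
  by rewrite subr_gt0 t_incr // (altc_lt h3 js).
rewrite big_cons.
have := IH _ _ h3 x xs; rewrite svN /Dp mulNr oppr_gt0 => hneg.
have hlt : t x - t g < 0 by rewrite subr_lt0 t_incr // (altc_lt h3 xs).
by rewrite mulrCA; rewrite nmulr_rgt0.
Qed.



Lemma t_inj : injective t.
Proof. by move=> i j hij; apply/eqP; apply: contraTT (eqxx (t i)); rewrite {2}hij => /t_neq. Qed.

Lemma Dp_neq0 s i : uniq s -> Dp s i != 0.
Proof.
move=> us; rewrite /Dp prodf_seq_neq0; apply/allP => j jr /=.
rewrite subr_eq0 eq_sym t_neq //.
by move: jr; rewrite mem_rem_uniq // inE => /andP[].
Qed.

Lemma interp (s : seq 'I_n) K k : uniq s -> size s = K.+1 -> (k < K)%N ->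
  \sum_(i <- s) t i ^+ k / Dp s i = 0.
Proof.
move=> us hs hk.
pose L i := PX [seq t j | j <- rem i s].
have hL i y : (L i).[y] = \prod_(j <- rem i s) (y - t j).
  by rewrite /L /PX big_map horner_prod; apply: eq_bigr => j _; rewrite hornerXsubC.
have sL i : i \in s -> size (L i) = K.+1.
  by move=> iS; rewrite /L /PX size_prod_XsubC size_map size_rem // hs.
have cL i : i \in s -> (L i)`_K = 1.
  move=> iS; rewrite -[K]/(K.+1.-1) -(sL i iS) -lead_coefE.
  by rewrite /L /PX lead_coef_prod_XsubC.
pose Rp := \sum_(i <- s) (t i ^+ k / Dp s i) *: L i.
have hRt l : l \in s -> Rp.[t l] = t l ^+ k.
  move=> ls; rewrite /Rp horner_sum (big_rem l) //= big1_seq ?addr0.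
    by rewrite hornerZ hL -/(Dp s l) mulfVK // Dp_neq0.
  move=> i /= ir; rewrite hornerZ hL (big_rem l) /=; first by rewrite subrr mul0r mulr0.
  have il : i != l by move: ir; rewrite mem_rem_uniq // inE => /andP[].
  by rewrite mem_rem_uniq // inE eq_sym il ls.
have hR : Rp = 'X^k.
  apply/eqP; rewrite -subr_eq0; apply/negPn/negP => hnz.
  have := max_poly_roots hnz (rs := map t s).
  rewrite map_inj_uniq; last exact: t_inj.
  rewrite size_map hs => /(_ _ us) h.
  have : (size (Rp - 'X^k)%R <= K.+1)%N.
    apply: leq_trans (size_polyD _ _) _; rewrite size_polyN size_polyXn geq_max ltnS (ltnW hk) andbT.
    rewrite /Rp big_seq; apply: (big_ind (fun p : {poly R} => size p <= K.+1)%N).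
    - by rewrite size_poly0.
    - by move=> p q hp hq; apply: leq_trans (size_polyD _ _) _; rewrite geq_max hp hq.
    - by move=> i iS; apply: leq_trans (size_scale_leq _ _) _; rewrite sL.
  rewrite leqNgt h //; apply/allP => x /mapP [l ls ->].
  by rewrite rootE hornerD hornerN hRt // hornerXn subrr.
have := congr1 (fun p : {poly R} => p`_K) hR.
rewrite /Rp coef_sum coefXn gtn_eqF //= mulr0n => h0.
apply: etrans h0; rewrite !big_seq; apply: eq_bigr => i iS.
by rewrite coefZ cL // mulr1.
Qed.

Lemma sgn_same (x y : R) : 0 < x * y -> ((0 < x) = (0 < y)) /\ ((x < 0) = (y < 0)).
Proof.
case: (ltrgtP x 0) => hx.
- by rewrite nmulr_rgt0 // => hy; rewrite hy (lt_gtF hy).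
- by rewrite pmulr_rgt0 // => hy; rewrite hy (lt_gtF hy).
- by rewrite hx mul0r ltxx.
Qed.

Lemma mom_sub (f g : 'I_n -> R) k : mom (fun i => f i - g i) k = mom f k - mom g k.
Proof. by rewrite /mom -sumrB; apply: eq_bigr => i _; rewrite mulrBl. Qed.

Lemma sum_in_seq (s : seq 'I_n) (f : 'I_n -> R) : uniq s ->
  \sum_i (if i \in s then f i else 0) = \sum_(i <- s) f i.
Proof. by move=> us; rewrite -big_mkcond /= big_uniq. Qed.

Lemma conv0 d p : ~ conv t d set0 p.
Proof.
move=> [lam [_ h1 h2 _]]; move: h2; rewrite big1 => [/eqP|i _]; first by rewrite eq_sym oner_eq0.
by apply: h1; rewrite inE.
Qed.

Section Circ.
Variables (nu : 'I_n -> R) (d : nat) (m : 'I_n) (s' : seq 'I_n).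
Hypothesis hc : altc nu true n (m :: s').
Hypothesis hsz : size s' = d.+1.
Let s := m :: s'.
Let P := [set i in s | 0 < nu i].
Let N := [set i in s | nu i < 0].

Lemma us : uniq s. Proof. exact: altc_uniq hc. Qed.

Lemma nu_m : 0 < nu m. Proof. by case: hc. Qed.

Lemma s'_lt j : j \in s' -> (j < m)%N.
Proof. move=> js; case: hc => _ _ h. exact: (altc_lt h js). Qed.

Lemma circ_heights p hN hP : is_height t d N p hN -> is_height t d P p hP -> hN <= hP.
Proof.
move=> /height_inv [al [a0 a1 a2 a3 a4]] /height_inv [be [b0 b1 b2 b3 b4]].
pose de i := be i - al i.
have hm k : (k <= d)%N -> mom de k = 0.
  rewrite /de mom_sub; case: k => [_|k hk].
    by rewrite /mom; under eq_bigr do rewrite expr0 mulr1; under [X in _ - X]eq_bigr do rewrite expr0 mulr1; rewrite a2 b2 subrr.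
  have := b3 (Ordinal hk); rewrite a3 => h.
  by rewrite /mom h subrr.
have htop : mom de d.+1 = hP - hN by rewrite /de mom_sub a4 b4.
pose Q := PX (map t s').
have sQ : size Q = d.+2 by rewrite /Q /PX size_prod_XsubC size_map hsz.
have lQ : Q`_d.+1 = 1.
  by rewrite -[d.+1]/(d.+2.-1) -sQ -lead_coefE /Q /PX lead_coef_prod_XsubC.
have hQ y : Q.[y] = \prod_(j <- s') (y - t j).
  by rewrite /Q /PX big_map horner_prod; apply: eq_bigr => j _; rewrite hornerXsubC.
rewrite -subr_ge0; have := mom_poly hm (eq_leq sQ); rewrite lQ mul1r htop => <-.
rewrite (bigD1 m) //= big1 ?addr0.
  apply: mulr_ge0.
    rewrite /de (a1 m) ?subr0 // inE negb_and; apply/orP; right.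
    by rewrite -leNgt ltW // nu_m.
  by rewrite hQ big_seq prodr_ge0 // => j js; rewrite subr_ge0 ltW // t_incr // s'_lt.
move=> i him.
case: (boolP (i \in s')) => [iS|niS].
  by rewrite hQ (big_rem i) //= subrr mul0r mulr0.
have nis : i \notin s by rewrite inE negb_or him.
rewrite /de (a1 i) ?(b1 i) ?subrr ?mul0r // inE negb_and nis //.
Qed.


Lemma circ_overlap : overlap t d N P.
Proof.
split.
  by move=> p hp; split; apply: conv_sub hp; rewrite ?subsetIl ?subsetIr.
pose w i := if i \in s then (Dp s i)^-1 else 0.
have hsign i : i \in s -> 0 < nu i * Dp s i.
  by move=> iS; have := altc_Dp hc iS.
have hmw k : (k <= d)%N -> mom w k = 0.
  move=> hk; rewrite /mom.
  have -> : \sum_i w i * t i ^+ k = \sum_i (if i \in s then t i ^+ k / Dp s i else 0).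
    by apply: eq_bigr => i _; rewrite /w; case: (i \in s); rewrite ?mul0r // mulrC.
  rewrite sum_in_seq; last exact: us.
  apply: (interp (K := d.+1)); first exact: us.
    by rewrite /s /= hsz.
  by rewrite ltnS.
pose wp i := if 0 < w i then w i else 0.
pose wn i := if w i < 0 then - w i else 0.
have wpn i : w i = wp i - wn i.
  rewrite /wp /wn; case: (ltrgtP (w i) 0) => h. all: try (rewrite (lt_gtF h)). all: rewrite ?ltxx ?opprK ?subr0 ?sub0r ?opprK ?subr0 ?add0r //.
have wp0 i : 0 <= wp i by rewrite /wp; case: (boolP (0 < w i)) => h //; rewrite ltW.
have wn0 i : 0 <= wn i by rewrite /wn; case: (boolP (w i < 0)) => h //; rewrite oppr_ge0 ltW.
have hmom k : (k <= d)%N -> \sum_i wp i * t i ^+ k = \sum_i wn i * t i ^+ k.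
  move=> hk; apply/eqP; rewrite -subr_eq0 -sumrB; apply/eqP.
  by rewrite -[RHS](hmw k hk) /mom; apply: eq_bigr => i _; rewrite -mulrBl -wpn.
pose W := \sum_i wp i.
have wm : 0 < wp m.
  have := sgn_same (hsign m (mem_head _ _)); rewrite nu_m => -[hD _].
  by rewrite /wp /w mem_head /= invr_gt0 -hD /= invr_gt0 -hD.
have Wpos : 0 < W.
  rewrite /W (bigD1 m) //=.
  have : 0 <= \sum_(i | i != m) wp i by apply: sumr_ge0.
  move: wm; lra.
have WN : \sum_i wn i = W.
  by have := hmom 0%N (leq0n _); under eq_bigr do rewrite expr0 mulr1; under [in X in _ = X -> _]eq_bigr do rewrite expr0 mulr1.
pose lP i := wp i / W.
pose lN i := wn i / W.
exists (\sum_i lP i *: gamma d (t i)); split.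
- exists lN; split.
  + by move=> i; rewrite /lN divr_ge0 // ltW.
  + move=> i; rewrite /lN /wn /w in_set => hi.
    case: (boolP (i \in s)) => iS /=; last by rewrite ltxx mul0r.
    rewrite invr_lt0; case: (boolP (Dp s i < 0)) => hD; last by rewrite mul0r.
    have [_ e] := sgn_same (hsign i iS).
    by move: hi; rewrite iS e hD.
  + have -> : \sum_i lN i = (\sum_i wn i) / W by rewrite big_distrl.
    by rewrite WN divff // gt_eqF.
  + apply/rowP => k; rewrite !sum_entry.
    have -> : \sum_i lP i * t i ^+ k.+1 = (\sum_i wp i * t i ^+ k.+1) / W.
      by rewrite big_distrl; apply: eq_bigr => i _; rewrite mulrAC.
    have -> : \sum_i lN i * t i ^+ k.+1 = (\sum_i wn i * t i ^+ k.+1) / W.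
      by rewrite big_distrl; apply: eq_bigr => i _; rewrite mulrAC.
    by rewrite hmom.
- exists lP; split=> //.
  + by move=> i; rewrite /lP divr_ge0 // ltW.
  + move=> i; rewrite /lP /wp /w in_set => hi.
    case: (boolP (i \in s)) => iS /=; last by rewrite ltxx mul0r.
    rewrite invr_gt0; case: (boolP (0 < Dp s i)) => hD; last by rewrite mul0r.
    have [e _] := sgn_same (hsign i iS).
    by move: hi; rewrite iS e hD.
  + have -> : \sum_i lP i = (\sum_i wp i) / W by rewrite big_distrl.
    by rewrite divff // gt_eqF.
- rewrite (_ : N :&: P = set0); first exact: conv0.
  apply/setP => i; rewrite !in_set; case: (i \in s) => //=.
  by apply/negP => /andP[h1 h2]; have := lt_trans h1 h2; rewrite ltxx.
Qed.

Lemma circ_lt : lt_hd t d N P.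
Proof. split; [exact: circ_overlap | exact: circ_heights]. Qed.
End Circ.

Lemma card_set_seq (s : seq 'I_n) (p : pred 'I_n) : uniq s ->
  #|[set i in s | p i]| = count p s.
Proof.
move=> us; rewrite -size_filter -(card_uniqP (filter_uniq p us)).
by apply: eq_card => i; rewrite in_set mem_filter andbC.
Qed.

Lemma circuit_exists nu d (A B : {set 'I_n}) :
  (forall i, 0 < nu i -> i \in A) -> (forall i, nu i < 0 -> i \in B) ->
  (forall k, (k <= d)%N -> mom nu k = 0) -> 0 < mom nu d.+1 ->
  exists (P N : {set 'I_n}), [/\ P \subset A, N \subset B, #|P| = (uphalf d).+1,
    #|N| = (d./2).+1 & lt_hd t d N P].
Proof.
move=> hA hB hm hpos; have [[|m s'] [hc hs]] := chain_exists hm hpos => //.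
case: hs => hsz.
have us := altc_uniq hc.
have [c1 c2] := altc_count hc.
exists [set i in m :: s' | 0 < nu i], [set i in m :: s' | nu i < 0]; split.
- by apply/subsetP => i; rewrite in_set => /andP[_ /hA].
- by apply/subsetP => i; rewrite in_set => /andP[_ /hB].
- by rewrite card_set_seq // c1 /= hsz !uphalfE.
- by rewrite card_set_seq // c2 /= hsz.
- exact: circ_lt hc hsz.
Qed.

Lemma is_height_sub d (A B : {set 'I_n}) p h : A \subset B -> is_height t d A p h -> is_height t d B p h.
Proof. by move=> sAB [q [hq h1 h2]]; exists q; split=> //; apply: conv_sub hq. Qed.

Lemma violation d (A B : {set 'I_n}) p hA hB :
  is_height t d A p hA -> is_height t d B p hB -> hB < hA ->
  exists (P N : {set 'I_n}), [/\ P \subset A, N \subset B, #|P| = (uphalf d).+1,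
    #|N| = (d./2).+1 & lt_hd t d N P].
Proof.
move=> /height_inv [la [l0 l1 l2 l3 l4]] /height_inv [mu [m0 m1 m2 m3 m4]] hlt.
apply: (circuit_exists (nu := fun i => la i - mu i)).
- move=> i hi; apply: contraT => /l1 h; move: hi; rewrite h sub0r oppr_gt0.
  by rewrite ltNge m0.
- move=> i hi; apply: contraT => /m1 h; move: hi; rewrite h subr0.
  by rewrite ltNge l0.
- move=> k hk; rewrite mom_sub; case: k hk => [_|k hk].
    rewrite /mom; under eq_bigr do rewrite expr0 mulr1.
    by under [X in _ - X]eq_bigr do rewrite expr0 mulr1; rewrite l2 m2 subrr.
  by have := l3 (Ordinal hk); rewrite m3 /mom => <-; rewrite subrr.
- by rewrite mom_sub /mom -l4 -m4 subr_gt0.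
Qed.

Lemma strict_lt d (N P : {set 'I_n}) : lt_hd t d N P -> (#|N| + #|P| <= d.+2)%N ->
  exists p hN hP, [/\ is_height t d N p hN, is_height t d P p hP & hN < hP].
Proof.
move=> [[_ [p [cN cP ncI]]] hle] hcard.
case: cN => al [a0 a1 a2 ea]; case: cP => be [b0 b1 b2 eb].
have hN := height_of d a0 a1 a2; rewrite -ea in hN.
have hP := height_of d b0 b1 b2; rewrite -eb in hP.
exists p, (\sum_i al i * t i ^+ d.+1), (\sum_i be i * t i ^+ d.+1); split => //.
rewrite lt_neqAle (hle _ _ _ hN hP) andbT; apply/eqP => heq; apply: ncI.
pose de i := be i - al i.
have hm k : (k <= d)%N -> mom de k = 0.
  rewrite /de mom_sub; case: k => [_|k hk].
    rewrite /mom; under eq_bigr do rewrite expr0 mulr1.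
    by under [X in _ - X]eq_bigr do rewrite expr0 mulr1; rewrite a2 b2 subrr.
  have h1 := sum_entry al (Ordinal hk); have h2 := sum_entry be (Ordinal hk).
  by rewrite /mom -h1 -h2 -ea -eb subrr.
have htop : mom de d.+1 = 0 by rewrite /de mom_sub /mom heq subrr.
have hab i : al i = be i.
  case: (boolP (i \in N :|: P)) => iNP; last first.
    by move: iNP; rewrite in_setU negb_or => /andP[/a1 -> /b1 ->].
  pose C := (N :|: P) :\ i.
  pose Q := PX (map t (enum C)).
  have sQ : (size Q <= d.+2)%N.
    rewrite /Q /PX size_prod_XsubC size_map -cardE ltnS.
    have := cardsD1 i (N :|: P); rewrite iNP add1n -/C => hC.
    rewrite -ltnS -hC; apply: leq_trans _ hcard; by rewrite cardsU leq_subr.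
  have hQ y : Q.[y] = \prod_(j <- enum C) (y - t j).
    by rewrite /Q /PX big_map horner_prod; apply: eq_bigr => j _; rewrite hornerXsubC.
  have := mom_poly hm sQ; rewrite htop mulr0 (bigD1 i) //= big1 ?addr0.
    move/eqP; rewrite mulf_eq0 => /orP[|]; first by rewrite /de subr_eq0 => /eqP.
    rewrite hQ => hz.
    have : \prod_(j <- enum C) (t i - t j) != 0.
      rewrite prodf_seq_neq0; apply/allP => j; rewrite mem_enum.
      by rewrite !in_setD1 => /andP[hji _] /=; rewrite subr_eq0 eq_sym t_neq.
    by rewrite hz.
  move=> j hji; case: (boolP (j \in C)) => jC.
    by rewrite hQ (big_rem j) ?mem_enum //= subrr mul0r mulr0.
  move: jC; rewrite in_setD1 hji /= in_setU negb_or => /andP[/a1 h1 /b1 h2].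
  by rewrite /de h1 h2 subrr mul0r.
exists al; split => // i; rewrite in_setI negb_and => /orP[/a1 //|/b1].
by rewrite -hab.
Qed.
End Main.

Unset Implicit Arguments.
Set Strict Implicit.

Theorem lemma2p10 (R : realType) (n d : nat) (t : 'I_n -> R)
  (t_incr : forall i j : 'I_n, (i < j)%N -> t i < t j)
  (T : {set {set 'I_n}}) (hT : triangulation t d T)
  (s : {set 'I_n}) (hs : (#|s| <= d.+1)%N) :
  (le_sT t d s T <->
     ~ exists (s' u : {set 'I_n}), [/\ s' \subset s, in_triang T u,
                       #|s'| = (uphalf d).+1, #|u| = (d./2).+1
                     & lt_hd t d u s'])
  /\
  (le_Ts t d T s <->
     ~ exists (s' u : {set 'I_n}), [/\ s' \subset s, in_triang T u,
                       #|u| = (uphalf d).+1, #|s'| = (d./2).+1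
                     & lt_hd t d s' u]).
Proof.
have hd : (d./2 + uphalf d = d)%N by rewrite uphalf_half addnCA addnn odd_double_half.
split; split.
- move=> hle [s' [u [ss' [s0 s0T su] cs' cu hlt]]].
  have [|p [hN [hP [h1 h2 h3]]]] := strict_lt t_incr hlt.
    by rewrite cs' cu addSn addnS hd.
  have := hle p hP s0 hN s0T (is_height_sub ss' h2) (is_height_sub su h1).
  by rewrite leNgt h3.
- move=> hno p hs0 u hu uT H1 H2; rewrite leNgt; apply/negP => hlt; apply: hno.
  have [P [N [h1 h2 h3 h4 h5]]] := violation t_incr H1 H2 hlt.
  by exists P, N; split=> //; exists u.
- move=> hle [s' [u [ss' [s0 s0T su] cu cs' hlt]]].
  have [|p [hN [hP [h1 h2 h3]]]] := strict_lt t_incr hlt.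
    by rewrite cs' cu addSn addnS hd.
  have := hle p hN s0 hP s0T (is_height_sub ss' h1) (is_height_sub su h2).
  by rewrite leNgt h3.
- move=> hno p hs0 u hu uT H1 H2; rewrite leNgt; apply/negP => hlt; apply: hno.
  have [P [N [h1 h2 h3 h4 h5]]] := violation t_incr H2 H1 hlt.
  by exists N, P; split=> //; exists u.
Qed.
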